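(* Let $n\ge1$, $0<p_{\mathrm{tot}}\le1$, and let $Y$ be a discrete random variable. Let $$\mathcal Z=\Big\{\max\big(\{Y\}\cup\{X_i\}_{i=1}^n\big)\ \Big|\ X_i\sim\mathrm{geom}(p_i),\ 0<p_i\le1,\ \prod_{i=1}^n p_i=p_{\mathrm{tot}}\Big\},$$ where $Y,X_1,\dots,X_n$ are mutually independent. Let $Z_{\mathrm{hom}}\in\mathcal Z$ be the member with $p_1=\dots=p_n$, i.e. $Z_{\mathrm{hom}}=\max(\{Y\}\cup\{X_{\mathrm{hom},i}\}_{i=1}^n)$ with $X_{\mathrm{hom},i}\sim\mathrm{geom}(\sqrt[n]{p_{\mathrm{tot}}})$. Then for every $Z\in\mathcal Z$, $Z\ge_{\mathrm{st}}Z_{\mathrm{hom}}$.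
   Context: $\mathrm{geom}(p)$ denotes the geometric distribution on $\{1,2,3,\dots\}$ with success probability $p$, so $\Pr(X\le k)=1-(1-p)^k$. For random variables $A,B$, $A\ge_{\mathrm{st}}B$ means $\Pr(A>z)\ge\Pr(B>z)$ for all real $z$. *)

(* Defs.v *)
From HB Require Import structures.
From mathcomp Require Import all_boot all_order all_algebra.
From mathcomp Require Import all_classical all_reals all_analysis.
Set Implicit Arguments. Unset Strict Implicit. Unset Printing Implicit Defensive.
Import Order.TTheory GRing.Theory Num.Theory.
Local Open Scope classical_set_scope.
Local Open Scope ring_scope.

Definition geom_distributed (R : realType) (d : measure_display)
  (T : measurableType d) (P : probability T R) (X : T -> R) (p : R) : Prop :=
  measurable_fun setT X /\
  forall k : nat, P (X @^-1` [set k.+1%:R]) = (p * (1 - p) ^+ k)%:E.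

Definition mutually_independent (R : realType) (d : measure_display)
  (T : measurableType d) (P : probability T R) (m : nat) (F : 'I_m -> T -> R) : Prop :=
  (forall i, measurable_fun setT (F i)) /\
  forall B : 'I_m -> set R, (forall i, measurable (B i)) ->
    P (\bigcap_i (F i @^-1` B i)) = (\prod_(i < m) P (F i @^-1` B i))%E.

(* The family (Y, X_1, ..., X_n) indexed by 'I_n.+1, Y at index 0. *)
Definition famYX (T R : Type) (n : nat) (Y : T -> R) (X : 'I_n -> T -> R)
  : 'I_n.+1 -> T -> R :=
  fun i => match unlift ord0 i with None => Y | Some j => X j end.

Definition discrete_rv (R : realType) (d : measure_display)
  (T : measurableType d) (P : probability T R) (Y : T -> R) : Prop :=
  measurable_fun setT Y /\
  exists S : set R, countable S /\ measurable S /\ P (Y @^-1` S) = 1%E.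

Definition maxYX (T : Type) (R : realType) (n : nat) (Y : T -> R) (X : 'I_n -> T -> R)
  : T -> R := fun w => \big[Num.max/Y w]_(i < n) X i w.

Definition st_ge (R : realType) (d1 d2 : measure_display)
  (T1 : measurableType d1) (T2 : measurableType d2)
  (P1 : probability T1 R) (P2 : probability T2 R) (A : T1 -> R) (B : T2 -> R) : Prop :=
  forall z : R, (P2 (B @^-1` [set x | (z < x)%R]) <= P1 (A @^-1` [set x | (z < x)%R]))%E.

(* Main.v *)
Require Import Defs.
From HB Require Import structures.
From mathcomp Require Import all_boot all_order all_algebra.
From mathcomp Require Import all_classical all_reals all_analysis.
From mathcomp Require Import ring lra.
Import Order.TTheory GRing.Theory Num.Theory.
Import numFieldNormedType.Exports.
Local Open Scope classical_set_scope.
Local Open Scope ring_scope.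



Definition fk {R : realType} (k : nat) (x : R) := 1 - (1 - x) ^+ k.
Definition Sk {R : realType} (k : nat) (u : R) := \sum_(j < k) u ^+ j.

Lemma fkE {R : realType} k (x : R) : fk k x = x * Sk k (1 - x).
Proof.
rewrite /fk /Sk.
have := subrX1 (1 - x) k.
move=> h. rewrite -[1 - _]opprB h. ring.
Qed.

Lemma key_ineq {R : realType} k (u v : R) : 0 <= v -> v <= u ->
  v ^+ k.-1 * Sk k u <= u ^+ k.-1 * Sk k v.
Proof.
move=> v0 vu; rewrite /Sk !mulr_sumr; apply: ler_sum => j _.
have jk : (j <= k.-1)%N by case: k j => [[]//|k] [j /= jk].
rewrite -(subnK jk) !exprD.
have u0 : 0 <= u by apply: le_trans vu.
rewrite [X in _ <= X](_ : _ = u ^+ (k.-1 - j) * (v ^+ j * u ^+ j)); last by ring.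
rewrite -mulrA.
apply: ler_wpM2r.
  by rewrite mulr_ge0 // exprn_ge0.
by apply: lerXn2r => //; rewrite inE.
Qed.

Lemma G_mono {R : realType} k (a b : R) : 0 < a -> a <= b -> b <= 1 ->
  b * (1 - b) ^+ k.-1 * fk k a <= a * (1 - a) ^+ k.-1 * fk k b.
Proof.
move=> a0 ab b1.
rewrite !fkE.
have -> : b * (1 - b) ^+ k.-1 * (a * Sk k (1 - a)) =
   (a * b) * ((1 - b) ^+ k.-1 * Sk k (1 - a)) by ring.
have -> : a * (1 - a) ^+ k.-1 * (b * Sk k (1 - b)) =
   (a * b) * ((1 - a) ^+ k.-1 * Sk k (1 - b)) by ring.
apply: ler_wpM2l.
  by rewrite mulr_ge0 // ltW // (lt_le_trans a0).
apply: key_ineq; first by rewrite subr_ge0.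
by rewrite lerB.
Qed.


Lemma fk_derive {R : realType} k (x : R) : is_derive x 1 (fk k) (k%:R * (1 - x) ^+ k.-1).
Proof.
have h1 : is_derive x (1:R) (cst (1:R) - id) (0 - 1) by apply: is_deriveB.
have h2 := is_deriveX k h1.
have h3 := is_deriveB (is_derive_cst (1:R) x 1) h2.
have -> : fk k = (cst (1:R) - (cst 1 - id) ^+ k).
  by apply/funext => y; rewrite /fk /= exprfctE.
apply: is_derive_eq h3 _.
rewrite (_ : (cst (1:R) - id) x = 1 - x) //. change (0 - (k%:R * (1 - x) ^+ k.-1) * (0 - 1) = k%:R * (1 - x) ^+ k.-1).
ring.
Qed.

Lemma fk_pos {R : realType} k (x : R) : (0 < k)%N -> 0 < x -> x <= 1 -> 0 < fk k x.
Proof.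
move=> k0 x0 x1; rewrite /fk subr_gt0 exprn_ilt1 ?subr_ge0 -?lt0n //.
lra.
Qed.

Lemma psi_derive {R : realType} k (c x : R) : 0 < x -> 0 < fk k x ->
  is_derive x 1 ((@ln R) \o fk k - c *: (@ln R))
    ((fk k x)^-1 * (k%:R * (1 - x) ^+ k.-1) - c *: x^-1).
Proof.
move=> x0 fx0.
have hA := is_derive1_comp (is_derive1_ln fx0) (fk_derive k x).
have hB := is_deriveZ c (is_derive1_ln x0).
exact: is_deriveB hA hB.
Qed.



Lemma tangent {R : realType} k (q p : R) : (0 < k)%N -> 0 < q -> q <= 1 -> 0 < p -> p <= 1 ->
  ln (fk k p) - (q * (k%:R * (1 - q) ^+ k.-1) / fk k q) * ln p <=
  ln (fk k q) - (q * (k%:R * (1 - q) ^+ k.-1) / fk k q) * ln q.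
Proof.
move=> k0 q0 q1 p0 p1.
set c := q * _ / _.
pose psi : R -> R := ((@ln R) \o fk k - c *: (@ln R)).
pose dpsi x := (fk k x)^-1 * (k%:R * (1 - x) ^+ k.-1) - c *: x^-1.
have hd : forall x : R, 0 < x -> x <= 1 -> is_derive x 1 psi (dpsi x).
  by move=> x x0 x1; apply: psi_derive => //; apply: fk_pos.
have hc : forall a b : R, 0 < a -> b <= 1 -> {within [set` `[a, b]%R], continuous psi}.
  move=> a b a0 b1; apply: (@derivable_within_continuous R R^o psi `[a, b]%R) => x.
  rewrite in_itv /= => /andP[ax xb].
  have := hd x (lt_le_trans a0 ax) (le_trans xb b1); by case.
have num : forall x : R, 0 < x -> x <= 1 ->
   dpsi x = k%:R * (x * (1 - x) ^+ k.-1 * fk k q - q * (1 - q) ^+ k.-1 * fk k x)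
              / (x * fk k x * fk k q).
  move=> x x0 x1; rewrite /dpsi /c.
  have := @fk_pos R k x k0 x0 x1; have := @fk_pos R k q k0 q0 q1.
  move=> h1 h2.
  change ((fk k x)^-1 * (k%:R * (1 - x) ^+ k.-1) - (q * (k%:R * (1 - q) ^+ k.-1) / fk k q) * x^-1 =
    k%:R * (x * (1 - x) ^+ k.-1 * fk k q - q * (1 - q) ^+ k.-1 * fk k x) / (x * fk k x * fk k q)).
  field.
  by rewrite !gt_eqF.
have pos : forall x : R, 0 < x -> x <= 1 -> 0 < x * fk k x * fk k q.
  by move=> x x0 x1; rewrite !mulr_gt0 // fk_pos.
have psiE : forall x : R, psi x = ln (fk k x) - c * ln x by [].
rewrite -!psiE.
case: (leP p q) => [pq|qp].
  have [x xI E] : exists2 x, x \in `[p, q] & psi q - psi p = dpsi x * (q - p).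
    apply: MVT_segment => //; last by apply: hc.
    move=> x; rewrite in_itv /= => /andP[px xq].
    by apply: hd; [apply: lt_trans px | apply: ltW; apply: lt_le_trans q1].
  move: xI; rewrite in_itv /= => /andP[px xq].
  have x0 : 0 < x by lra.
  have x1 : x <= 1 by lra.
  rewrite -subr_ge0 E; apply: mulr_ge0; last by lra.
  rewrite num //; apply: divr_ge0; last exact: ltW (pos _ x0 x1).
  by rewrite mulr_ge0 ?ler0n // subr_ge0 G_mono.
have [x xI E] : exists2 x, x \in `[q, p] & psi p - psi q = dpsi x * (p - q).
  apply: MVT_segment => //; first exact: ltW.
    move=> x; rewrite in_itv /= => /andP[px xq].
    by apply: hd; [apply: lt_trans px | apply: ltW; apply: lt_le_trans p1].
  by apply: hc.
move: xI; rewrite in_itv /= => /andP[qx xp].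
have x0 : 0 < x by lra.
have x1 : x <= 1 by lra.
rewrite -subr_le0 E; apply: mulr_le0_ge0; last by lra.
rewrite num // pmulr_lle0 ?invr_gt0 ?pos //.
rewrite pmulr_rle0 ?ltr0n // subr_le0 G_mono //.
Qed.


Lemma small_pow {R : realType} (x e : R) : 0 <= x -> x < 1 -> 0 < e -> exists N : nat, x ^+ N < e.
Proof.
move=> x0 x1 e0.
have h : `|x| < 1 by rewrite ger0_norm.
have := @cvgr_lt R nat _ _ _ 0 (cvg_expr h) e e0.
move=> [N _ HN]; exists N; exact: (HN N (leqnn N)).
Qed.

Lemma le_of_small {R : realType} (u a x : R) : 0 <= x -> x < 1 ->
  (forall N : nat, u <= a + x ^+ N) -> u <= a.
Proof.
move=> x0 x1 H; rewrite leNgt; apply/negP => au.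
have e0 : 0 < u - a by lra.
have [N hN] := small_pow _ _ x0 x1 e0.
have := H N; lra.
Qed.

Section Geom.
Context {R : realType} {d : measure_display} {T : measurableType d} (P : probability T R)
  (X : T -> R) (p : R).
Hypothesis mX : measurable_fun setT X.
Hypothesis hX : forall k : nat, P (X @^-1` [set k.+1%:R]) = (p * (1 - p) ^+ k)%:E.

Definition Ek k := [set w | exists2 j : nat, (j < k)%N & X w = j.+1%:R].

Lemma mpre B : measurable B -> measurable (X @^-1` B).
Proof. by move=> mB; rewrite -[X @^-1` B]setTI; apply: mX. Qed.

Lemma Ek0 : Ek 0 = set0.
Proof. by apply/seteqP; split => w // [j]. Qed.

Lemma Ek_S k : Ek k.+1 = Ek k `|` X @^-1` [set k.+1%:R].
Proof.
apply/seteqP; split => w /=.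
  move=> [j]; rewrite ltnS leq_eqVlt => /orP[/eqP -> ->|jk Xw]; first by right.
  by left; exists j.
case=> [[j jk Xw]|Xw]; first by exists j => //; apply: ltnW.
by exists k.
Qed.

Lemma Ek_meas k : measurable (Ek k).
Proof.
elim: k => [|k IH]; first by rewrite Ek0.
rewrite Ek_S; apply: measurableU => //; apply: mpre; exact: measurable_set1.
Qed.

Lemma Ek_P k : P (Ek k) = (1 - (1 - p) ^+ k)%:E.
Proof.
elim: k => [|k IH]; first by rewrite Ek0 measure0 expr0 subrr.
rewrite Ek_S measureU //; last 3 first.
- exact: Ek_meas.
- apply: mpre; exact: measurable_set1.
- apply/seteqP; split => w // [[j jk Xw]] /=; rewrite Xw => /eqP.
  by rewrite eqr_nat eqSS => /eqP jk'; rewrite jk' ltnn in jk.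
set a := (X in (X + _)%E); set b := (X in (_ + X)%E). have -> : a = (1 - (1 - p) ^+ k)%:E by exact: IH. have -> : b = (p * (1 - p) ^+ k)%:E by exact: hX. rewrite -EFinD exprS; congr (_%:E); ring.
Qed.

Lemma le_meas z : measurable [set x : R | x <= z].
Proof.
have -> : [set x : R | x <= z] = [set` `]-oo, z]%R].
  by apply/seteqP; split => x; rewrite /= in_itv /=.
exact: measurable_itv.
Qed.

Lemma geom_lower (z : R) : ((1 - (1 - p) ^+ (Num.truncn z))%:E <= P (X @^-1` [set x : R | (x <= z)%R]))%E.
Proof.
rewrite -Ek_P; apply: le_measure; rewrite ?inE; first exact: Ek_meas.
  by apply: mpre; exact: le_meas.
move=> w [j jk] /= ->.
have z1 : ~ (z < 1).
  move=> h; have : (Num.truncn z <= 0)%N by rewrite truncn_le_nat.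
  by rewrite leqn0 => /eqP e; rewrite e in jk.
have z0 : 0 <= z by rewrite leNgt; apply/negP => h; apply: z1; lra.
have := truncn_le z; rewrite z0 => tz.
apply: le_trans tz.
by rewrite ler_nat.
Qed.

Lemma geom_upper (z : R) : 0 < p -> p <= 1 ->
  (P (X @^-1` [set x : R | (x <= z)%R]) <= (1 - (1 - p) ^+ (Num.truncn z))%:E)%E.
Proof.
move=> p0 p1.
set A := X @^-1` _. set k := Num.truncn z.
have mA : measurable A by apply: mpre; exact: le_meas.
have fA : P A \is a fin_num := fin_num_measure P _ mA.
rewrite -(fineK fA) lee_fin.
apply: (@le_of_small _ _ _ (1 - p)); [lra|lra|] => N.
have sub : A `<=` Ek k `|` ~` Ek (k + N).
  move=> w Aw; case: (pselect (Ek (k + N) w)) => [[j jk Xw]|nE]; last by right.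
  left; exists j => //.
  have tz := truncnS_gt z.
  have : (j.+1%:R : R) < k.+1%:R.
    rewrite -Xw; apply: le_lt_trans tz; exact: Aw.
  by rewrite ltr_nat ltnS.
have h1 : (P A <= (1 - (1 - p) ^+ k)%:E + (1 - (1 - (1 - p) ^+ (k + N))%:E))%E.
  rewrite -(Ek_P k) -(Ek_P (k + N)) -probability_setC; last exact: Ek_meas.
  apply: le_trans (measureU2 P _ _); last 2 first.
  - exact: Ek_meas.
  - exact/measurableC/Ek_meas.
  apply: le_measure; rewrite ?inE //.
  exact/measurableU/measurableC/Ek_meas/Ek_meas.
rewrite -(fineK fA) -EFinB -EFinD lee_fin in h1.
have e : (1 - p) ^+ (k + N) <= (1 - p) ^+ N.
  rewrite exprD ler_piMl ?exprn_ge0 ?exprn_ile1 //; lra.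
lra.
Qed.

End Geom.

Lemma ln_prod {R : realType} n (f : 'I_n -> R) : (forall i, 0 < f i) ->
  ln (\prod_i f i) = \sum_i ln (f i).
Proof.
move=> fp.
have : 0 < \prod_i f i /\ ln (\prod_i f i) = \sum_i ln (f i).
  elim/big_rec2: _ => [|i a b _ [b0 IH]]; first by rewrite ln1.
  split; first by rewrite mulr_gt0.
  by rewrite lnM ?posrE // IH.
by case.
Qed.

Lemma prod_ineq {R : realType} n k (p : 'I_n -> R) (q : R) : (0 < n)%N ->
  (forall i, 0 < p i <= 1) -> 0 < q -> q <= 1 ->
  \sum_i ln (p i) = n%:R * ln q ->
  \prod_i fk k (p i) <= fk k q ^+ n.
Proof.
case: k => [|k] n0 hp q0 q1 hs.
  have f0 : forall x : R, fk 0 x = 0 by move=> x; rewrite /fk expr0 subrr.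
  rewrite (eq_bigr (fun _ => 0)); last by move=> i _; exact: f0.
  by rewrite prodr_const card_ord f0.
have hf : forall i, 0 < fk k.+1 (p i).
  by move=> i; have /andP[? ?] := hp i; apply: fk_pos.
have fq : 0 < fk k.+1 q by apply: fk_pos.
have pp : 0 < \prod_i fk k.+1 (p i) by apply: prodr_gt0 => i _.
rewrite -ler_ln ?posrE ?exprn_gt0 // ln_prod // lnXn //.
pose c := q * (k.+1%:R * (1 - q) ^+ k.+1.-1) / fk k.+1 q.
have t : forall i, ln (fk k.+1 (p i)) <= (ln (fk k.+1 q) - c * ln q) + c * ln (p i).
  move=> i; have /andP[? ?] := hp i.
  have h : ln (fk k.+1 (p i)) - c * ln (p i) <= ln (fk k.+1 q) - c * ln q.
    exact: (@tangent R k.+1 q (p i) isT q0 q1).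
  lra.
apply: le_trans (ler_sum _ (fun i _ => t i)) _.
rewrite big_split -mulr_sumr.
rewrite hs sumr_const card_ord -[(_ - _) *+ n]mulr_natr -[ln _ *+ n]mulr_natr.
rewrite le_eqVlt; apply/orP; left; apply/eqP; rewrite /=; ring.
Qed.


Lemma maxYX_leP {T : Type} {R : realType} n (Y : T -> R) (X : 'I_n -> T -> R) w z :
  (maxYX Y X w <= z) <-> (Y w <= z /\ forall i, X i w <= z).
Proof.
rewrite /maxYX; elim: n X => [|n IH] X.
  by rewrite big_ord0; split; [move=> h; split => // [[]] | case].
rewrite big_ord_recl ge_max.
split.
  move=> /andP[hm hb]; have [hY hX] := (IH (fun i => X (lift ord0 i))).1 hb.
  by split => // i; case: (unliftP ord0 i) => [j ->|->].
move=> [hY hX]; apply/andP; split => //.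
by apply/(IH (fun i => X (lift ord0 i))).2; split.
Qed.

Lemma famYX0 {T R : Type} n (Y : T -> R) (X : 'I_n -> T -> R) : famYX Y X ord0 = Y.
Proof. by rewrite /famYX unlift_none. Qed.

Lemma famYXS {T R : Type} n (Y : T -> R) (X : 'I_n -> T -> R) i :
  famYX Y X (lift ord0 i) = X i.
Proof. by rewrite /famYX liftK. Qed.

Lemma max_set {T : Type} {R : realType} n (Y : T -> R) (X : 'I_n -> T -> R) (z : R) :
  maxYX Y X @^-1` [set x : R | z < x] = ~` \bigcap_i (famYX Y X i @^-1` [set x : R | x <= z]).
Proof.
apply/seteqP; split => w /=.
  move=> zw hc.
  have : maxYX Y X w <= z.
    apply/maxYX_leP; split.
      by have := hc ord0 I; rewrite famYX0.
    by move=> i; have := hc (lift ord0 i) I; rewrite famYXS.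
  by rewrite leNgt zw.
move=> nc; rewrite ltNge; apply/negP => hle; apply: nc => i _.
move/maxYX_leP: hle => [hY hX'].
by case: (unliftP ord0 i) => [j ->|->] /=; rewrite ?famYXS ?famYX0 //.
Qed.

Theorem mainTheorem4 (R : realType) (n : nat) (ptot : R)
  (d1 : measure_display) (T1 : measurableType d1) (P1 : probability T1 R)
  (d2 : measure_display) (T2 : measurableType d2) (P2 : probability T2 R)
  (Y1 : T1 -> R) (Y2 : T2 -> R)
  (p : 'I_n -> R) (X : 'I_n -> T1 -> R) (Xhom : 'I_n -> T2 -> R) :
  (0 < n)%N -> 0 < ptot -> ptot <= 1 ->
  discrete_rv P1 Y1 ->
  (* Y1 and Y2 have the same distribution (the same Y) *)
  measurable_fun setT Y2 ->
  (forall B : set R, measurable B -> P1 (Y1 @^-1` B) = P2 (Y2 @^-1` B)) ->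
  (forall i, 0 < p i <= 1) -> \prod_(i < n) p i = ptot ->
  (forall i, geom_distributed P1 (X i) (p i)) ->
  mutually_independent P1 (famYX Y1 X) ->
  (forall i, geom_distributed P2 (Xhom i) (ptot `^ (n%:R)^-1)) ->
  mutually_independent P2 (famYX Y2 Xhom) ->
  st_ge P1 P2 (maxYX Y1 X) (maxYX Y2 Xhom).
Proof.
move=> n0 pt0 pt1 [mY1 _] mY2 hY hp hprod hX [mF1 ind1] hXh [mF2 ind2] z.
set q := ptot `^ (n%:R)^-1.
have q0 : 0 < q by rewrite /q powR_gt0.
have q1 : q <= 1.
  rewrite /q /powR gt_eqF // expR_le1 mulr_ge0_le0 ?invr_ge0 ?ler0n //.
  exact: ln_le0.
have hs : \sum_i ln (p i) = n%:R * ln q.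
  rewrite -ln_prod; last by move=> i; case/andP: (hp i).
  rewrite hprod /q ln_powR mulrA mulfV ?mul1r // pnatr_eq0 -lt0n.
  exact: n0.
set L := [set x : R | x <= z].
have mL : measurable L := le_meas z.
rewrite /st_ge !max_set.
have mc1 : measurable (\bigcap_i (famYX Y1 X i @^-1` L)).
  apply: fin_bigcap_measurable; first exact: finite_finset.
  by move=> i _; rewrite -[_ @^-1` _]setTI; apply: mF1.
have mc2 : measurable (\bigcap_i (famYX Y2 Xhom i @^-1` L)).
  apply: fin_bigcap_measurable; first exact: finite_finset.
  by move=> i _; rewrite -[_ @^-1` _]setTI; apply: mF2.
rewrite !probability_setC //.
rewrite (ind1 (fun _ => L)) // (ind2 (fun _ => L)) //.
rewrite !big_ord_recl !famYX0.
under eq_bigr do rewrite famYXS.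
under [X in (_ <= _ - _ * X)%E]eq_bigr do rewrite famYXS.
rewrite -(hY L mL).
have mpX1 : forall i, measurable (X i @^-1` L).
  by move=> i; rewrite -[_ @^-1` _]setTI; apply: (hX i).1.
have mpX2 : forall i, measurable (Xhom i @^-1` L).
  by move=> i; rewrite -[_ @^-1` _]setTI; apply: (hXh i).1.
have B1E : (\prod_i P1 (X i @^-1` L) = (\prod_i fine (P1 (X i @^-1` L)))%:E)%E.
  rewrite -prodEFin; apply: eq_bigr => i _; rewrite fineK //; exact: fin_num_measure.
have B2E : (\prod_i P2 (Xhom i @^-1` L) = (\prod_i fine (P2 (Xhom i @^-1` L)))%:E)%E.
  rewrite -prodEFin; apply: eq_bigr => i _; rewrite fineK //; exact: fin_num_measure.
rewrite B1E B2E.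
apply: leeB => //.
apply: lee_wpmul2l; first exact: measure_ge0.
rewrite lee_fin.
set k := Num.truncn z.
apply: (le_trans (y := \prod_i fk k (p i))).
  apply: ler_prod => i _; apply/andP; split; first by apply: fine_ge0; apply: measure_ge0.
  rewrite -lee_fin fineK; last exact: fin_num_measure.
  have /andP[pi0 pi1] := hp i.
  exact: (geom_upper P1 (X i) (p i) (hX i).1 (hX i).2 z pi0 pi1).
apply: le_trans (@prod_ineq R n k p q n0 hp q0 q1 hs) _.
have -> : fk k q ^+ n = \prod_(i < n) fk k q by rewrite prodr_const card_ord.
apply: ler_prod => i _; apply/andP; split.
  rewrite /fk subr_ge0 exprn_ile1 //; lra.
rewrite -lee_fin fineK; last exact: fin_num_measure.
exact: (geom_lower P2 (Xhom i) q (hXh i).1 (hXh i).2 z).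
Qed.
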